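(* For every $r_0\in(0,1)$ there exists $\gamma>0$ such that for all $\delta\in(0,1/10)$ and all $0<\alpha<r\le1$, and all $z$ with $$|z|\le\gamma\,\delta\, r\,\frac{\log(e/r)}{\log(e/\alpha)},$$ one has $d_{B(0,r_0)\setminus\{r\}}(0,z)\le\frac{\delta}{2\log(e/\alpha)}$.
   Context: $d_W$ denotes the hyperbolic distance in a hyperbolic domain $W$, normalized to have curvature $-1$ (on $\mathbb D$ the density is $2|dz|/(1-|z|^2)$). $B(0,r_0)$ is the open disk of radius $r_0$ centered at $0$ (if $r\ge r_0$, $B(0,r_0)\setminus\{r\}=B(0,r_0)$). *)

(* Defs.v *)
From Stdlib Require Import Reals.
From Coquelicot Require Import Coquelicot.
Open Scope R_scope.

Definition unit_disk (u : C) : Prop := Cmod u < 1.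

Definition open_ball0 (r0 : R) (z : C) : Prop := Cmod z < r0.

(* Hyperbolic distance on D, curvature -1 (density 2|dz|/(1-|z|^2)):
   d_D(u,v) = log((1+t)/(1-t)),  t = |(u-v)/(1 - conj(u) v)|. *)
Definition disk_dist (u v : C) : R :=
  let t := Cmod ((u - v) / (1 - Cconj u * v))%C in
  ln ((1 + t) / (1 - t)).

Definition holomorphic_on (U : C -> Prop) (f : C -> C) : Prop :=
  forall z : C, U z -> ex_derive (K := C_AbsRing) (V := C_NormedModule) f z.

Definition continuous_on_set (V : C -> Prop) (g : C -> C) : Prop :=
  forall y : C, V y -> filterlim g (within V (locally y)) (locally (g y)).

Definition covering_map_disk (W : C -> Prop) (p : C -> C) : Prop :=
  (forall u, unit_disk u -> W (p u)) /\
  (forall w, W w -> exists u, unit_disk u /\ p u = w) /\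
  (forall w, W w ->
     exists V : C -> Prop, open V /\ V w /\ (forall y, V y -> W y) /\
     exists (I : Type) (S : I -> C -> Prop),
       (forall i, open (S i)) /\
       (forall i x, S i x -> unit_disk x) /\
       (forall i j x, S i x -> S j x -> i = j) /\
       (forall x, unit_disk x -> (V (p x) <-> exists i, S i x)) /\
       (forall i, exists g : C -> C,
          continuous_on_set V g /\
          (forall y, V y -> S i (g y) /\ p (g y) = y) /\
          (forall x, S i x -> g (p x) = x))).

(* Hyperbolic distance on a hyperbolic domain W, via a holomorphic universal
   covering p : D -> W (D is simply connected, so any holomorphic covering
   from D is universal):  d_W(a,b) = inf { d_D(u,v) : p(u)=a, p(v)=b }.
   The infimum is also taken over all such coverings (they differ by
   automorphisms of D, so this does not change the value). *)
Definition hyp_dist (W : C -> Prop) (a b : C) : Rbar :=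
  Glb_Rbar (fun d => exists (p : C -> C) (u v : C),
     holomorphic_on unit_disk p /\ covering_map_disk W p /\
     unit_disk u /\ unit_disk v /\ p u = a /\ p v = b /\ d = disk_dist u v).

Definition punctured_ball (r0 r : R) (z : C) : Prop :=
  open_ball0 r0 z /\ z <> RtoC r.

(* Main.v *)
Require Import Defs.
From Stdlib Require Import Reals Lra Lia ZArith.
From Coquelicot Require Import Coquelicot.
Open Scope R_scope.

Lemma quad_derive (f : C -> C) (x l : C) (rho K : R) :
  0 < rho -> 0 <= K ->
  (forall y, Cmod (y - x) < rho -> Cmod (f y - f x - (y - x) * l) <= K * Cmod (y - x) ^ 2) ->
  is_derive (K := C_AbsRing) (V := C_NormedModule) f x l.
Proof.
  intros Hr HK H. split.
  - apply is_linear_scal_l.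
  - intros x' Hx'. pose proof (@is_filter_lim_locally_unique C_AbsRing (AbsRing_NormedModule C_AbsRing) x x' Hx') as E. subst x'.
    intros eps.
    assert (Hd : 0 < Rmin rho (eps / (K + 1))).
    { apply Rmin_pos; auto. apply Rdiv_lt_0_compat. apply cond_pos. lra. }
    eapply filter_imp; [| apply (locally_ball_norm (V := AbsRing_NormedModule C_AbsRing) x (mkposreal _ Hd))].
    intros y Hy. unfold ball_norm in Hy. simpl in Hy.
    change (Cmod (f y - f x - (y - x) * l) <= eps * Cmod (y - x)).
    change (Cmod (y - x) < Rmin rho (eps / (K + 1))) in Hy.
    assert (H1 : Cmod (y - x) < rho) by (eapply Rlt_le_trans; [apply Hy| apply Rmin_l]).
    assert (H2 : Cmod (y - x) < eps / (K + 1)) by (eapply Rlt_le_trans; [apply Hy| apply Rmin_r]).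
    eapply Rle_trans; [apply H; auto|].
    assert (0 <= Cmod (y - x)) by apply Cmod_ge_0.
    assert (K * Cmod (y - x) <= eps).
    { apply Rmult_lt_compat_l with (r := K + 1) in H2; [|lra].
      replace ((K + 1) * (eps / (K + 1))) with (pos eps) in H2 by (field; lra). nra. }
    simpl. nra.
Qed.

Lemma sin_near (a : R) : 0 <= a <= 1 -> a - a^3/6 <= sin a <= a - a^3/6 + a^5/120.
Proof. intros H.
  destruct (sin_bound a 0) as [H1 H2]; [lra| pose proof PI2_1; lra |].
  unfold sin_approx, sin_term in *. simpl in H1, H2. split; lra.
Qed.

Lemma sin_abs_le (x : R) : Rabs (sin x) <= Rabs x.
Proof.
  destruct (Rle_dec (Rabs x) 1) as [H|H].
  - destruct (Rle_dec 0 x) as [Hx|Hx].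
    + rewrite (Rabs_right x) in * by lra.
      destruct (sin_near x) as [A B]; [lra|].
      assert (x^3/6 >= 0) by (apply Rle_ge; apply Rmult_le_pos; [apply pow_le; lra| lra]).
      assert (x^5/120 <= x^3/6).
      { assert (x^5 <= x^3). { replace (x^5) with (x^3 * (x*x)) by ring.
          assert (0 <= x^3) by (apply pow_le; lra). assert (x*x <= 1) by nra. nra. } lra. }
      assert (x^3 <= x) by (replace (x^3) with (x*(x*x)) by ring; nra).
      rewrite Rabs_right; lra.
    + rewrite (Rabs_left x) in * by lra.
      destruct (sin_near (-x)) as [A B]; [lra|]. rewrite sin_neg in A, B.
      assert ((-x)^3/6 >= 0) by (apply Rle_ge; apply Rmult_le_pos; [apply pow_le; lra| lra]).
      assert ((-x)^5/120 <= (-x)^3/6).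
      { assert ((-x)^5 <= (-x)^3). { replace ((-x)^5) with ((-x)^3 * (x*x)) by ring.
          assert (0 <= (-x)^3) by (apply pow_le; lra). assert (x*x <= 1) by nra. nra. } lra. }
      assert ((-x)^3 <= -x) by (replace ((-x)^3) with ((-x)*(x*x)) by ring; nra).
      rewrite Rabs_left1; lra.
  - pose proof (SIN_bound x). apply Rabs_le in H0 || idtac.
    destruct (SIN_bound x). unfold Rabs at 1. destruct (Rcase_abs (sin x)); lra.
Qed.

Lemma sin_minus_id (b : R) : Rabs b <= 1 -> Rabs (sin b - b) <= b^2.
Proof.
  intros Hb. destruct (Rle_dec 0 b) as [Hx|Hx].
  - rewrite Rabs_right in Hb by lra.
    destruct (sin_near b) as [A B]; [lra|].
    assert (0 <= b^3) by (apply pow_le; lra).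
    assert (b^5 <= b^3). { replace (b^5) with (b^3 * (b*b)) by ring. assert (b*b <= 1) by nra. nra. }
    assert (b^3 <= b^2). { replace (b^3) with (b^2 * b) by ring. assert (0 <= b^2) by nra. nra. }
    apply Rabs_le; lra.
  - rewrite Rabs_left in Hb by lra.
    destruct (sin_near (-b)) as [A B]; [lra|]. rewrite sin_neg in A, B.
    assert (0 <= (-b)^3) by (apply pow_le; lra).
    assert ((-b)^5 <= (-b)^3). { replace ((-b)^5) with ((-b)^3 * (b*b)) by ring. assert (b*b <= 1) by nra. nra. }
    assert ((-b)^3 <= b^2). { replace ((-b)^3) with (b^2 * (-b)) by ring. assert (0 <= b^2) by nra. nra. }
    apply Rabs_le; lra.
Qed.

Lemma cos_minus_1 (b : R) : Rabs (cos b - 1) <= b^2/2.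
Proof.
  replace b with (2 * (b/2)) at 1 by field. rewrite cos_2a_sin.
  pose proof (sin_abs_le (b/2)) as H.
  assert (sin (b/2) * sin (b/2) <= (b/2)*(b/2)).
  { rewrite <- (Rabs_mult_sqr (sin (b/2))) || idtac.
    assert (Rabs (sin (b/2)) * Rabs (sin (b/2)) <= Rabs (b/2) * Rabs (b/2)).
    { apply Rmult_le_compat; auto using Rabs_pos. }
    rewrite <- !Rabs_mult in H0. rewrite !Rabs_right in H0 by (apply Rle_ge; nra). auto. }
  assert (0 <= sin (b/2) * sin (b/2)) by nra.
  rewrite Rabs_left1; nra.
Qed.

Lemma exp_near (a : R) : Rabs a <= 1/2 -> Rabs (exp a - 1 - a) <= 2 * a^2 /\ exp a <= 2.
Proof.
  intros Ha. apply Rabs_le_between in Ha || (apply Rabs_le_inv in Ha).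
  pose proof (exp_ineq1_le a). pose proof (exp_ineq1_le (-a)).
  assert (exp a * exp (-a) = 1) by (rewrite <- exp_plus; replace (a + -a) with 0 by ring; apply exp_0).
  assert (exp a * (1 - a) <= 1) by (pose proof (exp_pos a); nra).
  assert (exp a <= 1 / (1 - a)) by (apply (Rmult_le_reg_r (1 - a)); [lra| field_simplify; lra]).
  assert (1 / (1-a) - 1 - a = a^2/(1-a)) by (field; lra).
  assert (a^2/(1-a) <= 2 * a^2) by (apply (Rmult_le_reg_r (1 - a)); [lra|]; field_simplify; nra).
  assert (1 / (1-a) <= 2) by (apply (Rmult_le_reg_r (1 - a)); [lra|]; field_simplify; lra).
  split; [|lra]. assert (0 <= a^2) by nra. apply Rabs_le; lra.
Qed.

Lemma atan_abs_le (x : R) : Rabs (atan x) <= Rabs x.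
Proof.
  destruct (Rtotal_order 0 x) as [H|[H|H]].
  - destruct (MVT_cor2 atan (fun y => / (1 + y^2)) 0 x H) as [c [Hc _]].
    { intros; apply derivable_pt_lim_atan. }
    rewrite atan_0 in Hc. rewrite Rminus_0_r in Hc.
    assert (0 < / (1 + c^2) <= 1).
    { split. apply Rinv_0_lt_compat; nra. rewrite <- Rinv_1. apply Rinv_le_contravar; nra. }
    rewrite Hc, !Rabs_right; nra.
  - subst. rewrite atan_0. lra.
  - destruct (MVT_cor2 atan (fun y => / (1 + y^2)) x 0 H) as [c [Hc _]].
    { intros; apply derivable_pt_lim_atan. }
    rewrite atan_0 in Hc.
    assert (0 < / (1 + c^2) <= 1).
    { split. apply Rinv_0_lt_compat; nra. rewrite <- Rinv_1. apply Rinv_le_contravar; nra. }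
    assert (atan x = - (/ (1 + c^2) * (0 - x))) by lra.
    rewrite H1. rewrite Rabs_Ropp, (Rabs_left x) by lra. rewrite Rabs_right; nra.
Qed.

Lemma trig_Zperiod (x : R) (k : Z) :
  cos (x + 2 * IZR k * PI) = cos x /\ sin (x + 2 * IZR k * PI) = sin x.
Proof.
  destruct k as [|p|p].
  - simpl. rewrite Rmult_0_r, Rmult_0_l, Rplus_0_r. auto.
  - replace (IZR (Z.pos p)) with (INR (Pos.to_nat p)) by (rewrite INR_IZR_INZ, positive_nat_Z; auto).
    split; [apply cos_period| apply sin_period].
  - replace (IZR (Z.neg p)) with (- INR (Pos.to_nat p)) by (rewrite INR_IZR_INZ, positive_nat_Z; auto).
    pose proof (cos_period (x + 2 * - INR (Pos.to_nat p) * PI) (Pos.to_nat p)) as A.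
    pose proof (sin_period (x + 2 * - INR (Pos.to_nat p) * PI) (Pos.to_nat p)) as B.
    replace (x + 2 * - INR (Pos.to_nat p) * PI + 2 * INR (Pos.to_nat p) * PI) with x in A, B by ring.
    auto.
Qed.

Definition Cexp (z : C) : C := (exp (fst z) * cos (snd z), exp (fst z) * sin (snd z)).

Lemma Cmod_sq (z : C) : Cmod z ^ 2 = fst z ^ 2 + snd z ^ 2.
Proof. unfold Cmod. rewrite pow2_sqrt; auto. nra. Qed.

Lemma im_le_Cmod (z : C) : Rabs (snd z) <= Cmod z.
Proof.
  pose proof (Cmod_sq z). pose proof (Cmod_ge_0 z). pose proof (Rabs_pos (snd z)).
  rewrite <- (pow2_abs (snd z)) in H. nra.
Qed.

Lemma Cmod_le_sum (z : C) : Cmod z <= Rabs (fst z) + Rabs (snd z).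
Proof.
  assert (0 <= Cmod z) by apply Cmod_ge_0.
  pose proof (Cmod_sq z). pose proof (Rabs_pos (fst z)). pose proof (Rabs_pos (snd z)).
  assert (Cmod z ^ 2 <= (Rabs (fst z) + Rabs (snd z))^2).
  { rewrite H0. rewrite <- (pow2_abs (fst z)), <- (pow2_abs (snd z)). nra. }
  nra.
Qed.

Lemma Cexp_add (z w : C) : Cexp (z + w) = (Cexp z * Cexp w)%C.
Proof.
  destruct z as [a b], w as [c d]. unfold Cexp, Cmult; simpl.
  rewrite exp_plus, cos_plus, sin_plus. f_equal; ring.
Qed.

Lemma Cmod_Cexp (z : C) : Cmod (Cexp z) = exp (fst z).
Proof.
  unfold Cmod, Cexp; cbn [fst snd].
  replace ((exp (fst z) * cos (snd z)) ^ 2 + (exp (fst z) * sin (snd z)) ^ 2)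
    with (exp (fst z) ^ 2) by (pose proof (sin2_cos2 (snd z)); unfold Rsqr in *; nra).
  apply sqrt_pow2. pose proof (exp_pos (fst z)); lra.
Qed.

Lemma Cexp_0 : Cexp 0 = 1%C.
Proof. unfold Cexp; simpl. rewrite exp_0, cos_0, sin_0. apply injective_projections; simpl; ring. Qed.

Lemma Cexp_near (h : C) : Cmod h <= 1/2 -> Cmod (Cexp h - 1 - h) <= 4 * Cmod h ^ 2.
Proof.
  intros Hh. destruct h as [a b].
  pose proof (Cmod_sq (a, b)) as Hs. simpl in Hs.
  assert (Ha : Rabs a <= 1/2). { eapply Rle_trans; [apply (re_le_Cmod (a, b))| auto]. }
  assert (Hb : Rabs b <= 1/2). { eapply Rle_trans; [apply (im_le_Cmod (a, b))| auto]. }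
  destruct (exp_near a Ha) as [E1 E2].
  pose proof (cos_minus_1 b) as C1. pose proof (sin_minus_id b ltac:(lra)) as S1.
  pose proof (sin_abs_le b) as S2. pose proof (exp_pos a).
  eapply Rle_trans; [apply Cmod_le_sum|]. unfold Cexp; simpl.
  assert (Rabs (exp a * cos b - 1 - a) <= 2 * (a^2 + b^2)).
  { replace (exp a * cos b - 1 - a) with ((exp a - 1 - a) + exp a * (cos b - 1)) by ring.
    eapply Rle_trans; [apply Rabs_triang|]. rewrite Rabs_mult, (Rabs_right (exp a)) by lra.
    assert (exp a * Rabs (cos b - 1) <= 2 * (b^2/2)).
    { apply Rmult_le_compat; auto using Rabs_pos; lra. }
    nra. }
  assert (Rabs (exp a * sin b - b) <= 2 * (a^2 + b^2)).
  { replace (exp a * sin b - b) with ((exp a - 1) * sin b + (sin b - b)) by ring.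
    eapply Rle_trans; [apply Rabs_triang|]. rewrite Rabs_mult.
    assert (Rabs (exp a - 1) <= 2 * Rabs a).
    { replace (exp a - 1) with ((exp a - 1 - a) + a) by ring.
      eapply Rle_trans; [apply Rabs_triang|]. rewrite <- (pow2_abs a) in E1.
      assert (Rabs a ^ 2 <= Rabs a * (1/2)) by (pose proof (Rabs_pos a); simpl; nra). lra. }
    assert (Rabs (exp a - 1) * Rabs (sin b) <= 2 * Rabs a * Rabs b).
    { apply Rmult_le_compat; auto using Rabs_pos. }
    assert (2 * Rabs a * Rabs b <= a^2 + b^2).
    { rewrite <- (pow2_abs a), <- (pow2_abs b). pose proof (pow2_ge_0 (Rabs a - Rabs b)). simpl in *. nra. }
    nra. }
  rewrite Hs.
  replace (exp a * cos b + - (1) + - a) with (exp a * cos b - 1 - a) by ring.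
  replace (exp a * sin b + - 0 + - b) with (exp a * sin b - b) by ring.
  replace (a*(a*1)+b*(b*1)) with (a^2+b^2) by ring. lra.
Qed.

Lemma Cexp_derive (x : C) : is_derive (K := C_AbsRing) (V := C_NormedModule) Cexp x (Cexp x).
Proof.
  apply (quad_derive Cexp x (Cexp x) (1/2) (4 * Cmod (Cexp x))); [lra| pose proof (Cmod_ge_0 (Cexp x)); lra|].
  intros y Hy.
  replace (Cexp y - Cexp x - (y - x) * Cexp x)%C with (Cexp x * (Cexp (y - x) - 1 - (y - x)))%C.
  - rewrite Cmod_mult.
    replace (4 * Cmod (Cexp x) * Cmod (y - x) ^ 2) with (Cmod (Cexp x) * (4 * Cmod (y - x) ^ 2)) by ring.
    apply Rmult_le_compat_l; [apply Cmod_ge_0|].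
    apply Cexp_near. lra.
  - replace (Cexp y) with (Cexp (x + (y - x))) by (f_equal; ring). rewrite Cexp_add. ring.
Qed.

Lemma Cmod_pos_ne (w : C) : w <> 0%C -> 0 < Cmod w.
Proof.
  intros H. pose proof (Cmod_ge_0 w). destruct (Req_dec (Cmod w) 0) as [E|E].
  - apply Cmod_eq_0 in E. contradiction.
  - lra.
Qed.

Definition tpk (k : Z) : C := (0, 2 * IZR k * PI).

Lemma Cexp_shift (z : C) (k : Z) : Cexp (z + tpk k)%C = Cexp z.
Proof.
  destruct z as [a b]. unfold Cexp, tpk. cbn [fst snd Cplus].
  destruct (trig_Zperiod b k) as [A B]. rewrite Rplus_0_r, A, B. auto.
Qed.

Lemma Cexp_one (z : C) : Cexp z = 1%C -> exists k : Z, z = tpk k.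
Proof.
  intros H. destruct z as [a b].
  assert (Ha : a = 0).
  { pose proof (Cmod_Cexp (a, b)) as M. rewrite H, Cmod_1 in M. simpl in M.
    apply exp_inv. rewrite exp_0. auto. }
  subst a. unfold Cexp in H. cbn [fst snd] in H. rewrite exp_0 in H.
  injection H as H1 H2. rewrite Rmult_1_l in H1.
  pose proof (cos_2a_sin (b/2)) as Hc. replace (2 * (b/2)) with b in Hc by field.
  assert (sin (b/2) = 0) by nra.
  destruct (sin_eq_0_0 _ H) as [k Hk]. exists k. unfold tpk. f_equal. lra.
Qed.

Lemma Cexp_neg (w : C) : (Cexp w * Cexp (- w))%C = 1%C.
Proof. rewrite <- Cexp_add. replace (w + - w)%C with (RtoC 0) by ring. apply Cexp_0. Qed.

Lemma Cexp_eq (z w : C) : Cexp z = Cexp w -> exists k : Z, z = (w + tpk k)%C.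
Proof.
  intros H. destruct (Cexp_one (z - w)) as [k Hk].
  - unfold Cminus. rewrite Cexp_add, H. apply Cexp_neg.
  - exists k. rewrite <- Hk. ring.
Qed.

Lemma Cexp_surj (w : C) : w <> 0%C -> exists zeta, Cexp zeta = w /\ fst zeta = ln (Cmod w).
Proof.
  intros Hw. pose proof (Cmod_pos_ne w Hw) as Hm. set (m := Cmod w) in *.
  pose proof (Cmod_sq w) as Hs. fold m in Hs. destruct w as [x y]. cbn [fst snd] in *.
  assert (Hx : -1 <= x / m <= 1).
  { assert (x^2 <= m^2) by nra. split.
    - apply (Rmult_le_reg_r m); auto. field_simplify; [|lra]. nra.
    - apply (Rmult_le_reg_r m); auto. field_simplify; [|lra]. nra. }
  assert (Hsq : sqrt (1 - (x/m)²) = Rabs y / m).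
  { replace (1 - (x/m)²) with ((Rabs y / m)^2).
    - apply sqrt_pow2. apply Rmult_le_pos; [apply Rabs_pos| left; apply Rinv_0_lt_compat; auto].
    - assert (E : Rabs y ^2 = m^2 - x^2) by (rewrite pow2_abs; lra).
      replace ((Rabs y / m)^2) with (Rabs y ^ 2 / m ^ 2) by (field; lra).
      rewrite E. unfold Rsqr. field. lra. }
  destruct (Rle_dec 0 y) as [Hy|Hy].
  - exists (ln m, acos (x/m)). split; [|auto].
    unfold Cexp; cbn [fst snd]. rewrite exp_ln, cos_acos, sin_acos, Hsq by auto.
    rewrite Rabs_right by lra. f_equal; field; lra.
  - exists (ln m, - acos (x/m)). split; [|auto].
    unfold Cexp; cbn [fst snd]. rewrite cos_neg, sin_neg, exp_ln, cos_acos, sin_acos, Hsq by auto.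
    rewrite Rabs_left by lra. f_equal; field; lra.
Qed.

Definition Clog (q : C) : C := (ln (Cmod q), atan (snd q / fst q)).

Lemma Cexp_Clog (q : C) : 0 < fst q -> Cexp (Clog q) = q.
Proof.
  intros Hq. assert (Hn : q <> 0%C) by (intro E; subst; simpl in Hq; lra).
  pose proof (Cmod_pos_ne q Hn) as Hm.
  destruct q as [a b]. unfold Clog, Cexp. cbn [fst snd] in *.
  rewrite exp_ln by auto. rewrite cos_atan, sin_atan.
  assert (Hs : sqrt (1 + (b / a)²) = Cmod (a, b) / a).
  { unfold Cmod. cbn [fst snd].
    replace (1 + (b/a)²) with ((a^2 + b^2) / a^2) by (unfold Rsqr; field; lra).
    rewrite sqrt_div_alt by nra. rewrite sqrt_pow2 by lra. auto. }
  rewrite Hs. f_equal; field; split; lra.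
Qed.

Lemma ln_near (s : R) : 1/2 <= s -> Rabs (ln s) <= 2 * Rabs (s - 1).
Proof.
  intros Hs.
  assert (A : ln s <= s - 1).
  { pose proof (exp_ineq1_le (ln s)). rewrite exp_ln in H by lra. lra. }
  assert (B : ln (/ s) <= / s - 1).
  { pose proof (exp_ineq1_le (ln (/ s))). rewrite exp_ln in H. lra. apply Rinv_0_lt_compat; lra. }
  rewrite ln_Rinv in B by lra.
  assert (/ s - 1 = (1 - s) / s) by (field; lra).
  assert ((1 - s)/s <= 2 * Rabs (s - 1)).
  { destruct (Rle_dec 1 s).
    - assert ((1 - s)/s <= 0). { apply Rmult_le_0_r; [lra| left; apply Rinv_0_lt_compat; lra]. }
      pose proof (Rabs_pos (s - 1)). lra.
    - rewrite Rabs_left by lra. apply (Rmult_le_reg_r s); [lra|]. field_simplify; nra. }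
  apply Rabs_le. split; [lra|]. pose proof (Rle_abs (s - 1)). lra.
Qed.

Lemma Clog_bound (q : C) : Cmod (q - 1) <= 1/2 -> Cmod (Clog q) <= 4 * Cmod (q - 1).
Proof.
  intros H.
  assert (Ha : Rabs (fst q - 1) <= Cmod (q - 1)%C).
  { pose proof (re_le_Cmod (q - 1)%C). replace (Re (q - 1)%C) with (fst q - 1) in H0 by (simpl; ring). auto. }
  assert (Hb : Rabs (snd q) <= Cmod (q - 1)%C).
  { pose proof (im_le_Cmod (q - 1)%C). replace (snd (q - 1)%C) with (snd q) in H0 by (simpl; ring). auto. }
  assert (Hm : Rabs (Cmod q - 1) <= Cmod (q - 1)%C).
  { pose proof (Cmod_triangle (q - 1)%C 1%C). pose proof (Cmod_triangle q (1 - q)%C).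
    replace (q - 1 + 1)%C with q in H0 by ring.
    replace (q + (1 - q))%C with (RtoC 1) in H1 by ring.
    rewrite Cmod_1 in H0, H1.
    replace (1 - q)%C with (- (q - 1))%C in H1 by ring. rewrite Cmod_opp in H1.
    apply Rabs_le. lra. }
  assert (Ha1 : 1/2 <= fst q) by (unfold Rabs in Ha; destruct (Rcase_abs (fst q - 1)); lra).
  eapply Rle_trans; [apply Cmod_le_sum|]. unfold Clog; cbn [fst snd].
  assert (Rabs (ln (Cmod q)) <= 2 * Cmod (q - 1)%C).
  { eapply Rle_trans; [apply ln_near|]. unfold Rabs in Hm; destruct (Rcase_abs (Cmod q - 1)); lra. lra. }
  assert (Rabs (atan (snd q / fst q)) <= 2 * Cmod (q - 1)%C).
  { eapply Rle_trans; [apply atan_abs_le|]. unfold Rdiv. rewrite Rabs_mult.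
    rewrite Rabs_inv, (Rabs_right (fst q)) by lra.
    assert (/ fst q <= 2). { replace 2 with (/ (1/2)) by field. apply Rinv_le_contravar; lra. }
    assert (0 < / fst q) by (apply Rinv_0_lt_compat; lra).
    pose proof (Rabs_pos (snd q)). nra. }
  lra.
Qed.

Definition ccont (f : C -> C) (x : C) : Prop :=
  forall eps, 0 < eps -> exists d, 0 < d /\ forall y, Cmod (y - x) < d -> Cmod (f y - f x) < eps.
Definition ccontR (f : C -> R) (x : C) : Prop :=
  forall eps, 0 < eps -> exists d, 0 < d /\ forall y, Cmod (y - x) < d -> Rabs (f y - f x) < eps.

Lemma Cmod_fst_le (z : C) : Rabs (fst z) <= Cmod z.
Proof. apply re_le_Cmod. Qed.

Lemma prod_ball_Cmod (x y : C) (e : R) :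
  Rabs (fst y - fst x) < e -> Rabs (snd y - snd x) < e -> Cmod (y - x) < 2 * e.
Proof.
  intros H1 H2. eapply Rle_lt_trans; [apply Cmod_le_sum|]. simpl.
  replace (fst y + - fst x) with (fst y - fst x) by ring.
  replace (snd y + - snd x) with (snd y - snd x) by ring. lra.
Qed.

Lemma Cmod_prod_ball (x y : C) (e : R) :
  Cmod (y - x) < e -> Rabs (fst y - fst x) < e /\ Rabs (snd y - snd x) < e.
Proof.
  intros H. split.
  - eapply Rle_lt_trans; [|apply H]. pose proof (Cmod_fst_le (y - x)). simpl in H0.
    replace (fst y - fst x) with (fst y + - fst x) by ring. auto.
  - eapply Rle_lt_trans; [|apply H]. pose proof (im_le_Cmod (y - x)). simpl in H0.
    replace (snd y - snd x) with (snd y + - snd x) by ring. auto.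
Qed.

Lemma locally_C_iff (x : C) (P : C -> Prop) :
  @locally C_UniformSpace x P <-> exists d, 0 < d /\ forall y, Cmod (y - x) < d -> P y.
Proof.
  split.
  - intros [eps Heps]. exists eps. split; [apply cond_pos|].
    intros y Hy. apply Heps. destruct (Cmod_prod_ball x y eps Hy) as [A B].
    split; auto.
  - intros [d [Hd H]]. assert (Hd2 : 0 < d / 2) by lra. exists (mkposreal _ Hd2).
    intros y [B1 B2]. apply H.
    replace d with (2 * (d/2)) by field. apply prod_ball_Cmod; auto.
Qed.

Lemma open_of_balls (P : C -> Prop) :
  (forall x, P x -> exists d, 0 < d /\ forall y, Cmod (y - x) < d -> P y) -> open P.
Proof. intros H x Hx. apply locally_C_iff. auto. Qed.

Lemma balls_of_open (P : C -> Prop) (x : C) :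
  open P -> P x -> exists d, 0 < d /\ forall y, Cmod (y - x) < d -> P y.
Proof. intros H Hx. apply locally_C_iff. apply H; auto. Qed.

Lemma ccont_of_derive (f : C -> C) (x : C) :
  ex_derive (K := C_AbsRing) (V := C_NormedModule) f x -> ccont f x.
Proof.
  intros H. pose proof (ex_derive_continuous f x H) as Hc.
  intros eps Heps.
  assert (L : @locally C_UniformSpace (f x) (fun z => Cmod (z - f x) < eps)).
  { apply locally_C_iff. exists eps. split; auto. }
  specialize (Hc _ L). destruct Hc as [d Hd].
  exists d. split; [apply cond_pos|]. intros y Hy. apply Hd. exact Hy.
Qed.

Lemma cont_to_ccontR (f : C -> R) (x : C) :
  @continuous C_UniformSpace R_UniformSpace f x -> ccontR f x.
Proof.
  intros Hc eps Heps.
  assert (L : @locally R_UniformSpace (f x) (fun z => Rabs (z - f x) < eps)).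
  { exists (mkposreal _ Heps). intros z Hz. exact Hz. }
  specialize (Hc _ L). apply locally_C_iff in Hc. exact Hc.
Qed.

Lemma ccont_comp (f g : C -> C) (x : C) :
  ccont f x -> ccont g (f x) -> ccont (fun y => g (f y)) x.
Proof.
  intros Hf Hg eps Heps. destruct (Hg eps Heps) as [d1 [Hd1 H1]].
  destruct (Hf d1 Hd1) as [d2 [Hd2 H2]]. exists d2. split; auto.
Qed.

Lemma ccont_pair (f1 f2 : C -> R) (x : C) :
  ccontR f1 x -> ccontR f2 x -> ccont (fun y => (f1 y, f2 y)) x.
Proof.
  intros H1 H2 eps Heps. assert (He : 0 < eps / 2) by lra.
  destruct (H1 _ He) as [d1 [Hd1 K1]]. destruct (H2 _ He) as [d2 [Hd2 K2]].
  exists (Rmin d1 d2). split; [apply Rmin_pos; auto|].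
  intros y Hy.
  assert (A : Cmod (y - x) < d1) by (eapply Rlt_le_trans; [apply Hy| apply Rmin_l]).
  assert (B : Cmod (y - x) < d2) by (eapply Rlt_le_trans; [apply Hy| apply Rmin_r]).
  specialize (K1 y A). specialize (K2 y B).
  replace eps with (2 * (eps/2)) by field. apply prod_ball_Cmod; simpl; auto.
Qed.

Lemma ccont_plus_const (f : C -> C) (c : C) (x : C) :
  ccont f x -> ccont (fun y => f y + c)%C x.
Proof.
  intros H eps Heps. destruct (H eps Heps) as [d [Hd K]]. exists d; split; auto.
  intros y Hy. replace (f y + c - (f x + c))%C with (f y - f x)%C by ring. auto.
Qed.

Lemma cont_Cmod (x : C) : @continuous C_UniformSpace R_UniformSpace Cmod x.
Proof.
  destruct x as [a b]. unfold Cmod.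
  apply (continuous_comp (fun y : C => fst y ^ 2 + snd y ^ 2) sqrt).
  - apply (continuous_plus (V := R_NormedModule) (fun y : C => fst y ^ 2) (fun y : C => snd y ^ 2)).
    + apply (continuous_ext (fun y : C => mult (fst y) (fst y))).
      { intros; simpl. unfold mult; simpl. ring. }
      apply (continuous_mult (U := C_UniformSpace) (K := R_AbsRing)); apply continuous_fst.
    + apply (continuous_ext (fun y : C => mult (snd y) (snd y))).
      { intros; simpl. unfold mult; simpl. ring. }
      apply (continuous_mult (U := C_UniformSpace) (K := R_AbsRing)); apply continuous_snd.
  - apply continuous_sqrt.
Qed.

Lemma Clog_ccont (q : C) : 0 < fst q -> ccont Clog q.
Proof.
  intros Hq. unfold Clog. apply ccont_pair; apply cont_to_ccontR.
  - apply (continuous_comp Cmod ln). apply cont_Cmod.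
    apply continuous_ln. apply Cmod_pos_ne. intro E; subst; simpl in Hq; lra.
  - destruct q as [a b]. simpl in Hq.
    apply (continuous_comp (fun y : C => snd y / fst y) atan); [| apply continuous_atan].
    apply (continuous_ext (fun y : C => mult (snd y) (/ fst y))).
    { intros; reflexivity. }
    apply (continuous_mult (U := C_UniformSpace) (K := R_AbsRing)); [apply continuous_snd|].
    apply (continuous_comp fst (fun t => / t)); [apply continuous_fst|].
    apply continuous_Rinv. simpl. lra.
Qed.

Lemma open_Cball (w : C) (rho : R) : open (fun y => Cmod (y - w) < rho).
Proof.
  apply open_of_balls. intros x Hx. exists (rho - Cmod (x - w)). split; [lra|].
  intros y Hy. replace (y - w)%C with ((y - x) + (x - w))%C by ring.
  eapply Rle_lt_trans; [apply Cmod_triangle|]. lra.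
Qed.

Lemma cont_on_of_ccont (V : C -> Prop) (g : C -> C) :
  (forall y, V y -> ccont g y) -> continuous_on_set V g.
Proof.
  intros H y Hy P HP. apply locally_C_iff in HP. destruct HP as [e [He HP]].
  destruct (H y Hy e He) as [d [Hd K]].
  unfold within. apply locally_C_iff. exists d. split; auto.
Qed.

Lemma quadK (f : C -> C) (x l : C) (rho K : R) :
  0 < rho -> 0 <= K ->
  (forall y, Cmod (y - x) < rho -> Cmod (f y - f x - (y - x) * l) <= K * Cmod (y - x) ^ 2) ->
  is_derive (K := C_AbsRing) (V := AbsRing_NormedModule C_AbsRing) f x l.
Proof.
  intros Hr HK H. split.
  - apply is_linear_scal_l.
  - intros x' Hx'. pose proof (@is_filter_lim_locally_unique C_AbsRing (AbsRing_NormedModule C_AbsRing) x x' Hx') as E. subst x'.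
    intros eps.
    assert (Hd : 0 < Rmin rho (eps / (K + 1))).
    { apply Rmin_pos; auto. apply Rdiv_lt_0_compat. apply cond_pos. lra. }
    eapply filter_imp; [| apply (locally_ball_norm (V := AbsRing_NormedModule C_AbsRing) x (mkposreal _ Hd))].
    intros y Hy. unfold ball_norm in Hy. simpl in Hy.
    change (Cmod (f y - f x - (y - x) * l) <= eps * Cmod (y - x)).
    change (Cmod (y - x) < Rmin rho (eps / (K + 1))) in Hy.
    assert (H1 : Cmod (y - x) < rho) by (eapply Rlt_le_trans; [apply Hy| apply Rmin_l]).
    assert (H2 : Cmod (y - x) < eps / (K + 1)) by (eapply Rlt_le_trans; [apply Hy| apply Rmin_r]).
    eapply Rle_trans; [apply H; auto|].
    assert (0 <= Cmod (y - x)) by apply Cmod_ge_0.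
    assert (K * Cmod (y - x) <= eps).
    { apply Rmult_lt_compat_l with (r := K + 1) in H2; [|lra].
      replace ((K + 1) * (eps / (K + 1))) with (pos eps) in H2 by (field; lra). nra. }
    simpl. nra.
Qed.

Definition exK (f : C -> C) (x : C) := ex_derive (K := C_AbsRing) (V := AbsRing_NormedModule C_AbsRing) f x.

Lemma bridge (f : C -> C) x : exK f x -> ex_derive (K := C_AbsRing) (V := C_NormedModule) f x.
Proof. intros [l [H1 H2]]. exists l. split. apply is_linear_scal_l.
  intros x' Hx' eps. specialize (H2 x' Hx' eps). revert H2. apply filter_imp. intros y Hy. exact Hy. Qed.

Lemma exK_comp (f g : C -> C) x : exK f (g x) -> exK g x -> exK (fun y => f (g y)) x.
Proof. intros. unfold exK in *. apply (ex_derive_comp (V := AbsRing_NormedModule C_AbsRing) f g x); auto. Qed.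

Lemma exK_affine (a b : C) (x : C) : exK (fun u => a * u + b)%C x.
Proof.
  exists a. apply (quadK _ x a 1 0); [lra| lra|].
  intros y _. replace (a * y + b - (a * x + b) - (y - x) * a)%C with (RtoC 0) by ring.
  rewrite Cmod_0. pose proof (Cmod_ge_0 (y - x)). nra.
Qed.

Lemma exK_Cinv (x : C) : x <> 0%C -> exK Cinv x.
Proof.
  intros Hx. pose proof (Cmod_pos_ne x Hx) as Hm.
  exists (- / (x * x))%C.
  apply (quadK _ x _ (Cmod x / 2) (2 / Cmod x ^ 3)); [lra| apply Rmult_le_pos; [lra| left; apply Rinv_0_lt_compat; apply pow_lt; lra]|].
  intros y Hy.
  assert (Hyx : Cmod x / 2 <= Cmod y).
  { pose proof (Cmod_triangle (x - y) y). replace (x - y + y)%C with x in H by ring.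
    replace (x - y)%C with (- (y - x))%C in H by ring. rewrite Cmod_opp in H. lra. }
  assert (Hy0 : y <> 0%C) by (intro E; subst; rewrite Cmod_0 in Hyx; lra).
  replace (/ y - / x - (y - x) * - / (x * x))%C with ((y - x) * (y - x) / (x * x * y))%C by (field; auto).
  rewrite Cmod_div by (repeat apply Cmult_neq_0; auto).
  rewrite !Cmod_mult.
  set (d := Cmod (y - x)) in *. set (m := Cmod x) in *. set (n := Cmod y) in *.
  assert (0 <= d) by apply Cmod_ge_0.
  assert (0 < n) by lra.
  assert (I1 : / (m * m * n) <= / (m^3 / 2)).
  { apply Rinv_le_contravar. apply Rdiv_lt_0_compat; [apply pow_lt; lra| lra]. simpl. nra. }
  replace (/ (m^3/2)) with (2 / m^3) in I1 by (field; lra).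
  unfold Rdiv in *. assert (0 <= d * d) by nra.
  replace (2 * / m ^ 3 * d ^ 2) with (d * d * (2 * / m^3)) by ring.
  apply Rmult_le_compat_l; auto.
Qed.

Lemma exK_Cexp (x : C) : exK Cexp x.
Proof.
  exists (Cexp x).
  apply (quadK Cexp x (Cexp x) (1/2) (4 * Cmod (Cexp x))); [lra| pose proof (Cmod_ge_0 (Cexp x)); lra|].
  intros y Hy.
  replace (Cexp y - Cexp x - (y - x) * Cexp x)%C with (Cexp x * (Cexp (y - x) - 1 - (y - x)))%C.
  - rewrite Cmod_mult.
    replace (4 * Cmod (Cexp x) * Cmod (y - x) ^ 2) with (Cmod (Cexp x) * (4 * Cmod (y - x) ^ 2)) by ring.
    apply Rmult_le_compat_l; [apply Cmod_ge_0|].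
    apply Cexp_near. lra.
  - replace (Cexp y) with (Cexp (x + (y - x))) by (f_equal; ring). rewrite Cexp_add. ring.
Qed.

Definition moeb (c1 c2 c3 c4 : C) (y : C) : C := (c1 + c2 * / (c3 * y + c4))%C.

Lemma exK_moeb c1 c2 c3 c4 y : (c3 * y + c4)%C <> 0%C -> exK (moeb c1 c2 c3 c4) y.
Proof.
  intros H. unfold moeb.
  apply (exK_comp (fun w => c2 * w + c1)%C (fun y => / (c3 * y + c4))%C y) ||
  (eapply ex_derive_ext; [| apply (exK_comp (fun w => c2 * w + c1)%C (fun y => / (c3 * y + c4))%C y)]).
  all: try (intros; simpl; ring).
  - apply exK_affine.
  - apply (exK_comp Cinv (fun y => c3 * y + c4)%C y); [apply exK_Cinv; auto| apply exK_affine].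
Qed.

Definition cay (u : C) : C := moeb 1 2 1 (-1) u.

Lemma sub1_ne (u : C) : u <> 1%C -> (u - 1 <> 0)%C.
Proof. intros H E. apply H. replace u with (u - 1 + 1)%C by ring. rewrite E. ring. Qed.

Lemma cay_eq (u : C) : u <> 1%C -> cay u = ((u + 1) / (u - 1))%C.
Proof.
  intros H. pose proof (sub1_ne u H).
  unfold cay, moeb. replace (1 * u + -1)%C with (u - 1)%C by ring. field. auto.
Qed.

Lemma C2_ne0 : (RtoC 2) <> 0%C.
Proof. intro E. injection E. lra. Qed.

Lemma cay_ne1 (u : C) : u <> 1%C -> cay u <> 1%C.
Proof.
  intros H E. pose proof (sub1_ne u H). rewrite cay_eq in E by auto.
  assert (u + 1 = u - 1)%C.
  { replace (u + 1)%C with ((u + 1) / (u - 1) * (u - 1))%C by (field; auto). rewrite E. ring. }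
  apply C2_ne0. replace (RtoC 2) with ((u + 1) - (u - 1))%C by ring. rewrite H1. ring.
Qed.

Lemma cay_inv (u : C) : u <> 1%C -> cay (cay u) = u.
Proof.
  intros H. pose proof (cay_ne1 u H). pose proof (sub1_ne u H).
  rewrite (cay_eq (cay u)) by auto. rewrite cay_eq by auto.
  field. split; auto.
  intro E. apply C2_ne0. replace (RtoC 2) with (u + 1 - (u - 1))%C by ring.
  rewrite E. ring.
Qed.

Lemma disk_ne1 (u : C) : Cmod u < 1 -> u <> 1%C.
Proof. intros H E. subst. rewrite Cmod_1 in H. lra. Qed.

Lemma re_neg_ne1 (z : C) : fst z < 0 -> z <> 1%C.
Proof. intros H E. subst. simpl in H. lra. Qed.

Lemma cay_re (u : C) : Cmod u < 1 -> fst (cay u) < 0.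
Proof.
  intros H. pose proof (Cmod_sq u) as Hs. destruct u as [x y]. cbn [fst snd] in Hs.
  assert (Hx : x^2 + y^2 < 1) by (pose proof (Cmod_ge_0 (x,y)); nra).
  assert (HD : 0 < (x - 1)^2 + y^2).
  { destruct (Req_dec x 1). subst. nra. assert (0 < (x-1)^2) by (apply pow2_gt_0 || (apply pow_lt || idtac); nra). nra. }
  unfold cay, moeb, Cinv. cbn [fst snd Cplus Cmult RtoC].
  replace (1 * x - 0 * y + -1) with (x - 1) by ring.
  replace (1 * y + 0 * x + 0) with y by ring.
  assert (0 < (1 - x^2 - y^2) / ((x - 1) ^ 2 + y ^ 2)) by (apply Rdiv_lt_0_compat; lra).
  replace (1 + (2 * ((x - 1) / ((x - 1) ^ 2 + y ^ 2)) - 0 * (- y / ((x - 1) ^ 2 + y ^ 2))))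
    with (- ((1 - x^2 - y^2) / ((x - 1) ^ 2 + y ^ 2))) by (field; lra).
  lra.
Qed.

Lemma cay_disk (z : C) : fst z < 0 -> Cmod (cay z) < 1.
Proof.
  intros H. pose proof (re_neg_ne1 z H) as H1. pose proof (sub1_ne z H1) as H2.
  rewrite cay_eq by auto. rewrite Cmod_div by auto.
  pose proof (Cmod_pos_ne _ H2) as P.
  apply (Rmult_lt_reg_r (Cmod (z - 1))); auto. field_simplify; [|lra].
  pose proof (Cmod_sq (z + 1)) as A. pose proof (Cmod_sq (z - 1)) as B.
  simpl in A, B. pose proof (Cmod_ge_0 (z + 1)).
  assert (Cmod (z + 1) ^ 2 < Cmod (z - 1) ^ 2).
  { simpl. rewrite A, B. nra. }
  nra.
Qed.

Definition Emap (u : C) : C := Cexp (cay u).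
Definition Dstar (w : C) : Prop := 0 < Cmod w < 1.

Lemma Emap_Dstar (u : C) : Cmod u < 1 -> Dstar (Emap u).
Proof.
  intros H. unfold Dstar, Emap. rewrite Cmod_Cexp. pose proof (cay_re u H).
  split; [apply exp_pos|]. rewrite <- exp_0. apply exp_increasing. auto.
Qed.

Lemma exK_cay (u : C) : u <> 1%C -> exK cay u.
Proof.
  intros H. apply exK_moeb. replace (1 * u + -1)%C with (u - 1)%C by ring. apply sub1_ne; auto.
Qed.

Lemma ccont_Emap (u : C) : u <> 1%C -> ccont Emap u.
Proof.
  intros H. apply ccont_of_derive. apply bridge. unfold Emap.
  apply (exK_comp Cexp cay u); [apply exK_Cexp| apply exK_cay; auto].
Qed.

Lemma ccont_cay (u : C) : u <> 1%C -> ccont cay u.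
Proof. intros H. apply ccont_of_derive, bridge, exK_cay; auto. Qed.

Lemma IZR_sep (m k : Z) : Rabs (IZR m - IZR k) < 1 -> m = k.
Proof.
  intros H. rewrite <- minus_IZR in H. destruct (Z.eq_dec (m - k) 0) as [E|E].
  - lia.
  - exfalso. rewrite <- abs_IZR in H. apply lt_IZR in H. lia.
Qed.

Lemma tpk_sep (m k : Z) : Cmod (tpk m - tpk k) < 2 -> m = k.
Proof.
  intros H. apply IZR_sep.
  pose proof (im_le_Cmod (tpk m - tpk k)%C) as A.
  pose proof PI2_1.
  replace (snd (tpk m - tpk k)%C) with ((IZR m - IZR k) * (2 * PI)) in A by (unfold tpk; simpl; ring).
  rewrite Rabs_mult, (Rabs_right (2 * PI)) in A by lra.
  pose proof (Rabs_pos (IZR m - IZR k)).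
  destruct (Rlt_dec (Rabs (IZR m - IZR k)) 1); auto. nra.
Qed.

Definition rho_of (w : C) : R := Rmin (Cmod w) (1 - Cmod w) / 2.
Definition Lb (w z0 : C) (y : C) : C := (Clog (/ w * y + 0) + z0)%C.

Lemma pos_ne (w : C) : 0 < Cmod w -> w <> 0%C.
Proof. intros H E. rewrite E in H. rewrite Cmod_0 in H. lra. Qed.

Lemma fst_tpk (z : C) (k : Z) : fst (z + tpk k)%C = fst z.
Proof. unfold tpk. simpl. ring. Qed.

Lemma Cmod_rev (y w : C) : Cmod w - Cmod (y - w) <= Cmod y /\ Cmod y <= Cmod w + Cmod (y - w).
Proof.
  split.
  - pose proof (Cmod_triangle y (w - y)). replace (y + (w - y))%C with w in H by ring.
    replace (w - y)%C with (- (y - w))%C in H by ring. rewrite Cmod_opp in H. lra.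
  - pose proof (Cmod_triangle w (y - w)). replace (w + (y - w))%C with y in H by ring. lra.
Qed.

Lemma local_log (w z0 y : C) :
  Dstar w -> Cexp z0 = w -> fst z0 = ln (Cmod w) -> Cmod (y - w) < rho_of w ->
  0 < fst (/ w * y + 0)%C /\ Cexp (Lb w z0 y) = y /\ fst (Lb w z0 y) < 0 /\ Dstar y /\ ccont (Lb w z0) y.
Proof.
  intros [Hw0 Hw1] Hz Hzf Hy.
  assert (Hr1 : rho_of w <= Cmod w / 2) by (unfold rho_of; pose proof (Rmin_l (Cmod w) (1 - Cmod w)); lra).
  assert (Hr2 : rho_of w <= (1 - Cmod w) / 2) by (unfold rho_of; pose proof (Rmin_r (Cmod w) (1 - Cmod w)); lra).
  assert (Hwn : w <> 0%C) by (apply pos_ne; auto).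
  destruct (Cmod_rev y w) as [R1 R2].
  assert (HD : Dstar y) by (split; lra).
  assert (Hq1 : Cmod ((/ w * y + 0) - 1)%C < 1/2).
  { replace ((/ w * y + 0) - 1)%C with ((y - w) / w)%C by (field; auto).
    rewrite Cmod_div by auto. apply (Rmult_lt_reg_r (Cmod w)); auto.
    field_simplify; lra. }
  assert (Hq : 0 < fst (/ w * y + 0)%C).
  { pose proof (re_le_Cmod ((/ w * y + 0) - 1)%C).
    replace (Re ((/ w * y + 0) - 1)%C) with (fst (/ w * y + 0)%C - 1) in H by (simpl; ring).
    unfold Rabs in H. destruct (Rcase_abs (fst (/ w * y + 0)%C - 1)); lra. }
  assert (HE : Cexp (Lb w z0 y) = y).
  { unfold Lb. rewrite Cexp_add, Cexp_Clog by auto. rewrite Hz. field. auto. }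
  split; [auto|]. split; [auto|]. split; [|split; [auto|]].
  - unfold Lb. 
    replace (fst (Clog (/ w * y + 0) + z0)%C) with (ln (Cmod (/ w * y + 0)%C) + fst z0) by (simpl; auto).
    rewrite Hzf, <- ln_mult.
    + rewrite <- Cmod_mult. replace ((/ w * y + 0) * w)%C with y by (field; auto).
      rewrite <- ln_1. destruct HD. apply ln_increasing; lra.
    + apply Cmod_pos_ne. intro E. rewrite E in Hq. simpl in Hq. lra.
    + auto.
  - unfold Lb. apply ccont_plus_const.
    apply (ccont_comp (fun y => / w * y + 0)%C Clog y).
    + apply ccont_of_derive, bridge, exK_affine.
    + apply Clog_ccont. auto.
Qed.

Theorem Emap_cover : covering_map_disk Dstar Emap.
Proof.
  split; [|split].
  - intros u Hu. apply Emap_Dstar; auto.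
  - intros w [Hw0 Hw1].
    assert (Hwn : w <> 0%C) by (apply pos_ne; auto).
    destruct (Cexp_surj w Hwn) as [z [Hz Hzf]].
    assert (Hz0 : fst z < 0) by (rewrite Hzf, <- ln_1; apply ln_increasing; lra).
    exists (cay z). split; [apply cay_disk; auto|].
    unfold Emap. rewrite cay_inv; auto. apply re_neg_ne1; auto.
  - intros w Hw. destruct Hw as [Hw0 Hw1].
    assert (Hwn : w <> 0%C) by (apply pos_ne; auto).
    destruct (Cexp_surj w Hwn) as [z0 [Hz Hzf]].
    assert (Hw : Dstar w) by (split; auto).
    assert (Hrho : 0 < rho_of w) by (unfold rho_of; apply Rdiv_lt_0_compat; [apply Rmin_pos; lra| lra]).
    pose (V := fun y => Cmod (y - w) < rho_of w).
    exists V. split; [apply open_Cball|]. split.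
    { unfold V. replace (w - w)%C with (RtoC 0) by ring. rewrite Cmod_0. auto. }
    split.
    { intros y Hy. destruct (local_log w z0 y Hw Hz Hzf Hy) as [_ [_ [_ [HD _]]]]. exact HD. }
    exists Z, (fun k x => Cmod x < 1 /\ V (Emap x) /\ Cmod (cay x - Lb w z0 (Emap x) - tpk k) < 1).
    split; [|split; [|split; [|split]]].
    +
      intros k. apply open_of_balls. intros x [Hx1 [Hx2 Hx3]].
      assert (Hx1' : x <> 1%C) by (apply disk_ne1; auto).
      assert (Hx0 : Cmod (x - 0) < 1) by (replace (x - 0)%C with x by ring; auto).
      destruct (balls_of_open (fun y => Cmod (y - 0) < 1) x (open_Cball 0 1) Hx0) as [d1 [Hd1 K1]].
      destruct (balls_of_open V (Emap x) (open_Cball w (rho_of w)) Hx2) as [d0 [Hd0 K0]].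
      destruct (ccont_Emap x Hx1' d0 Hd0) as [d2 [Hd2 K2]].
      destruct (local_log w z0 (Emap x) Hw Hz Hzf Hx2) as [_ [_ [_ [_ HL]]]].
      assert (He : 0 < (1 - Cmod (cay x - Lb w z0 (Emap x) - tpk k)) / 2) by lra.
      destruct (HL _ He) as [d3 [Hd3 K3]].
      destruct (ccont_Emap x Hx1' d3 Hd3) as [d4 [Hd4 K4]].
      destruct (ccont_cay x Hx1' _ He) as [d5 [Hd5 K5]].
      exists (Rmin (Rmin d1 d2) (Rmin d4 d5)).
      split; [repeat apply Rmin_pos; auto|].
      intros y Hy.
      assert (Y1 : Cmod (y - x) < d1) by (eapply Rlt_le_trans; [apply Hy|]; eapply Rle_trans; [apply Rmin_l| apply Rmin_l]).
      assert (Y2 : Cmod (y - x) < d2) by (eapply Rlt_le_trans; [apply Hy|]; eapply Rle_trans; [apply Rmin_l| apply Rmin_r]).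
      assert (Y4 : Cmod (y - x) < d4) by (eapply Rlt_le_trans; [apply Hy|]; eapply Rle_trans; [apply Rmin_r| apply Rmin_l]).
      assert (Y5 : Cmod (y - x) < d5) by (eapply Rlt_le_trans; [apply Hy|]; eapply Rle_trans; [apply Rmin_r| apply Rmin_r]).
      split; [|split].
      * specialize (K1 y Y1). replace (y - 0)%C with y in K1 by ring. auto.
      * apply K0. apply K2. auto.
      * specialize (K5 y Y5). specialize (K3 (Emap y) (K4 y Y4)).
        replace (cay y - Lb w z0 (Emap y) - tpk k)%C with
          ((cay y - cay x) - (Lb w z0 (Emap y) - Lb w z0 (Emap x)) + (cay x - Lb w z0 (Emap x) - tpk k))%C by ring.
        eapply Rle_lt_trans; [apply Cmod_triangle|].
        eapply Rle_lt_trans; [apply Rplus_le_compat_r; unfold Cminus at 1; apply Cmod_triangle|].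
        rewrite Cmod_opp. lra.
    + intros i x [Hx _]. exact Hx.
    +
      intros i j x [_ [_ Hi]] [_ [_ Hj]]. apply tpk_sep.
      replace (tpk i - tpk j)%C with (- (cay x - Lb w z0 (Emap x) - tpk i) + (cay x - Lb w z0 (Emap x) - tpk j))%C by ring.
      eapply Rle_lt_trans; [apply Cmod_triangle|]. rewrite Cmod_opp. lra.
    +
      intros x Hx. split.
      * intros HV. destruct (local_log w z0 (Emap x) Hw Hz Hzf HV) as [_ [HE _]].
        destruct (Cexp_eq (cay x) (Lb w z0 (Emap x))) as [k Hk].
        { rewrite HE. reflexivity. }
        exists k. split; [exact Hx|]. split; [exact HV|].
        rewrite Hk. replace (Lb w z0 (Emap x) + tpk k - Lb w z0 (Emap x) - tpk k)%C with (RtoC 0) by ring.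
        rewrite Cmod_0. lra.
      * intros [k [_ [HV _]]]. exact HV.
    +
      intros k. exists (fun y => cay (Lb w z0 y + tpk k)%C).
      split; [|split].
      * apply cont_on_of_ccont. intros y Hy.
        destruct (local_log w z0 y Hw Hz Hzf Hy) as [_ [_ [Hf [_ Hc]]]].
        apply (ccont_comp (fun y => Lb w z0 y + tpk k)%C cay y).
        { apply ccont_plus_const; auto. }
        { apply ccont_cay. apply re_neg_ne1. rewrite fst_tpk. lra. }
      * intros y Hy.
        destruct (local_log w z0 y Hw Hz Hzf Hy) as [_ [HE [Hf [_ _]]]].
        assert (Hf' : fst (Lb w z0 y + tpk k)%C < 0) by (rewrite fst_tpk; lra).
        assert (HEm : Emap (cay (Lb w z0 y + tpk k)%C) = y).
        { unfold Emap. rewrite cay_inv by (apply re_neg_ne1; auto). rewrite Cexp_shift. auto. }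
        split; [|auto].
        split; [apply cay_disk; auto|]. rewrite HEm. split; [auto|].
        rewrite cay_inv by (apply re_neg_ne1; auto).
        replace (Lb w z0 y + tpk k - Lb w z0 y - tpk k)%C with (RtoC 0) by ring.
        rewrite Cmod_0. lra.
      * intros x [Hx [HV Hk]].
        destruct (local_log w z0 (Emap x) Hw Hz Hzf HV) as [_ [HE _]].
        destruct (Cexp_eq (cay x) (Lb w z0 (Emap x))) as [m Hm].
        { rewrite HE. reflexivity. }
        assert (m = k).
        { apply tpk_sep. rewrite Hm in Hk.
          replace (Lb w z0 (Emap x) + tpk m - Lb w z0 (Emap x) - tpk k)%C with (tpk m - tpk k)%C in Hk by ring.
          lra. }
        subst m. rewrite <- Hm. apply cay_inv. apply disk_ne1; auto.
Qed.

Lemma transport (W1 W2 : C -> Prop) (P psi phi : C -> C) :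
  covering_map_disk W1 P -> open W2 ->
  (forall s, W1 s -> W2 (psi s) /\ phi (psi s) = s) ->
  (forall y, W2 y -> W1 (phi y) /\ psi (phi y) = y) ->
  (forall y, W2 y -> ccont phi y) ->
  covering_map_disk W2 (fun u => psi (P u)).
Proof.
  intros [Ha [Hb Hc]] HW2 Hpsi Hphi Hcont.
  split; [|split].
  - intros u Hu. apply Hpsi. apply Ha; auto.
  - intros w Hw. destruct (Hphi w Hw) as [H1 H2]. destruct (Hb _ H1) as [u [Hu Hpu]].
    exists u. split; auto. rewrite Hpu. auto.
  - intros w Hw. destruct (Hphi w Hw) as [H1 H2].
    destruct (Hc _ H1) as [V [HVo [HVw [HVW [I [S [HSo [HSd [HSdisj [HSch HSg]]]]]]]]]].
    exists (fun y => W2 y /\ V (phi y)). split; [|split; [|split]].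
    + apply open_of_balls. intros y [Hy1 Hy2].
      destruct (balls_of_open W2 y HW2 Hy1) as [d1 [Hd1 K1]].
      destruct (balls_of_open V (phi y) HVo Hy2) as [e [He K]].
      destruct (Hcont y Hy1 e He) as [d2 [Hd2 K2]].
      exists (Rmin d1 d2). split; [apply Rmin_pos; auto|].
      intros t Ht. split.
      * apply K1. eapply Rlt_le_trans; [apply Ht| apply Rmin_l].
      * apply K. apply K2. eapply Rlt_le_trans; [apply Ht| apply Rmin_r].
    + split; auto.
    + intros y [Hy _]. auto.
    + exists I, S. split; [auto|]. split; [auto|]. split; [auto|]. split.
      * intros x Hx. destruct (Hpsi (P x) (Ha x Hx)) as [A B]. rewrite B.
        split.
        -- intros [_ HV]. apply HSch; auto.
        -- intros HH. split; auto. apply HSch; auto.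
      * intros i. destruct (HSg i) as [g [Hgc [Hg1 Hg2]]].
        exists (fun y => g (phi y)). split; [|split].
        -- intros y [Hy1 Hy2].
           apply (filterlim_comp _ _ _ phi g _ (within V (locally (phi y)))).
           ++ intros Q HQ. unfold within in HQ. apply locally_C_iff in HQ.
              destruct HQ as [e [He K]]. destruct (Hcont y Hy1 e He) as [d [Hd Kd]].
              unfold filtermap, within. apply locally_C_iff. exists d. split; auto.
              intros t Ht [_ Ht2]. apply K; auto.
           ++ apply Hgc. auto.
        -- intros y [Hy1 Hy2]. destruct (Hg1 _ Hy2) as [A B]. split; auto.
           rewrite B. apply Hphi; auto.
        -- intros x Hx. assert (Hxd : unit_disk x) by (apply (HSd i); auto).
           destruct (Hpsi (P x) (Ha x Hxd)) as [_ B]. rewrite B. apply Hg2; auto.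
Qed.

Lemma open_unit_disk : open unit_disk.
Proof.
  apply open_of_balls. intros x Hx. unfold unit_disk in *. exists (1 - Cmod x). split; [lra|].
  intros y Hy. destruct (Cmod_rev y x). lra.
Qed.

Lemma id_cover : covering_map_disk unit_disk (fun u => u).
Proof.
  split; [|split].
  - auto.
  - intros w Hw. exists w. auto.
  - intros w Hw. exists unit_disk. split; [apply open_unit_disk|]. split; [auto|]. split; [auto|].
    exists unit, (fun _ => unit_disk). split; [intros; apply open_unit_disk|].
    split; [auto|]. split; [intros [] [] _ _ _; auto|]. split.
    + intros x Hx. split; [intros; exists tt; auto| auto].
    + intros i. exists (fun y => y). split; [|split; auto].
      apply cont_on_of_ccont. intros y _ eps Heps. exists eps. split; auto.
Qed.

Lemma open_punctured (r0 r : R) : open (punctured_ball r0 r).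
Proof.
  apply open_and.
  - apply open_of_balls. intros x Hx. unfold open_ball0 in *. exists (r0 - Cmod x). split; [lra|].
    intros y Hy. destruct (Cmod_rev y x). lra.
  - apply open_of_balls. intros x Hx. exists (Cmod (x - r)). split.
    + apply Cmod_pos_ne. intro E. apply Hx. replace x with (x - r + r)%C by ring. rewrite E. ring.
    + intros y Hy E. subst y. replace (r - x)%C with (- (x - r))%C in Hy by ring.
      rewrite Cmod_opp in Hy. lra.
Qed.

Lemma mob_lt (s : C) (b : R) : Cmod s < 1 -> -1 < b < 1 -> Cmod (s + b)%C < Cmod (1 + b * s)%C.
Proof.
  intros Hs Hb. pose proof (Cmod_sq s) as S. pose proof (Cmod_ge_0 s).
  assert (Hs2 : fst s ^ 2 + snd s ^ 2 < 1) by nra.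
  pose proof (Cmod_sq (s + b)%C) as A. pose proof (Cmod_sq (1 + b * s)%C) as B.
  pose proof (Cmod_ge_0 (s + b)%C). pose proof (Cmod_ge_0 (1 + b * s)%C).
  assert (Cmod (s + b)%C ^ 2 < Cmod (1 + b * s)%C ^ 2).
  { rewrite A, B. destruct s as [x y]. simpl. simpl in Hs2.
    assert (0 < (1 - b^2) * (1 - x^2 - y^2)) by (apply Rmult_lt_0_compat; nra). nra. }
  nra.
Qed.

Lemma mob_ne0 (s : C) (b : R) : Cmod s < 1 -> -1 < b < 1 -> (1 + b * s)%C <> 0%C.
Proof.
  intros Hs Hb E. pose proof (mob_lt s b Hs Hb). rewrite E, Cmod_0 in H.
  pose proof (Cmod_ge_0 (s + b)%C). lra.
Qed.

Lemma ln_dist_bound (t : R) : 0 <= t <= 1/3 -> ln ((1 + t) / (1 - t)) <= 3 * t.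
Proof.
  intros Ht. assert (0 < (1 + t) / (1 - t)) by (apply Rdiv_lt_0_compat; lra).
  pose proof (exp_ineq1_le (ln ((1 + t) / (1 - t)))). rewrite exp_ln in H0 by auto.
  assert ((1 + t) / (1 - t) - 1 <= 3 * t).
  { apply (Rmult_le_reg_r (1 - t)); [lra|]. field_simplify; nra. }
  lra.
Qed.

Lemma glb_le (S : R -> Prop) (d b : R) : S d -> d <= b -> Rbar_le (Glb_Rbar S) b.
Proof.
  intros Hd Hb. destruct (Glb_Rbar_correct S) as [H1 _].
  eapply Rbar_le_trans; [apply H1; exact Hd|]. simpl. auto.
Qed.

Lemma cay_conj (z : C) : fst z < 0 -> Cconj (cay z) = cay (Cconj z).
Proof.
  intros H. assert (Hc : fst (Cconj z) < 0) by (destruct z; simpl in *; lra).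
  rewrite !cay_eq by (apply re_neg_ne1; auto).
  pose proof (sub1_ne z (re_neg_ne1 z H)).
  rewrite Cdiv_conj by auto. rewrite Cplus_conj, Cminus_conj.
  replace (Cconj 1) with (RtoC 1) by (apply injective_projections; simpl; ring). auto.
Qed.

Lemma cay_dist (z1 z2 : C) : fst z1 < 0 -> fst z2 < 0 ->
  Cmod ((cay z1 - cay z2) / (1 - Cconj (cay z1) * cay z2))%C = Cmod (z2 - z1)%C / Cmod (Cconj z1 + z2)%C.
Proof.
  intros H1 H2. rewrite cay_conj by auto.
  set (x1 := Cconj z1).
  assert (Hx : fst x1 < 0) by (unfold x1; destruct z1; simpl in *; lra).
  assert (N1 : (z1 - 1)%C <> 0%C) by (apply sub1_ne, re_neg_ne1; auto).
  assert (N2 : (z2 - 1)%C <> 0%C) by (apply sub1_ne, re_neg_ne1; auto).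
  assert (N3 : (x1 - 1)%C <> 0%C) by (apply sub1_ne, re_neg_ne1; auto).
  assert (N4 : (x1 + z2)%C <> 0%C) by (intro E; assert (F : fst (x1 + z2)%C = 0) by (rewrite E; auto); simpl in F; lra).
  rewrite !cay_eq by (apply re_neg_ne1; auto).
  replace (((z1 + 1) / (z1 - 1) - (z2 + 1) / (z2 - 1)) / (1 - (x1 + 1) / (x1 - 1) * ((z2 + 1) / (z2 - 1))))%C
    with (- (z2 - z1) * (x1 - 1) / ((x1 + z2) * (z1 - 1)))%C.
  2: { field. repeat split; auto.
       replace ((x1 - 1) * (z2 - 1) - (x1 + 1) * (z2 + 1))%C with (-2 * (x1 + z2))%C by ring.
       apply Cmult_neq_0; auto. intro E. injection E. lra. }
  rewrite Cmod_div by (apply Cmult_neq_0; auto).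
  rewrite !Cmod_mult, Cmod_opp.
  assert (Cmod (x1 - 1)%C = Cmod (z1 - 1)%C).
  { unfold x1. replace (RtoC 1) with (Cconj 1) at 1 by (apply injective_projections; simpl; ring).
    rewrite <- Cminus_conj. apply Cmod_conj. }
  rewrite H. pose proof (Cmod_pos_ne _ N1). pose proof (Cmod_pos_ne _ N4). field. lra.
Qed.

Definition psiM (r0 a : R) : C -> C :=
  moeb (RtoC r0 / RtoC a)%C (- (RtoC r0 * (1 - RtoC a * RtoC a) / RtoC a))%C (RtoC a) 1.
Definition phiM (r0 a : R) : C -> C :=
  moeb (- 1 / RtoC a)%C ((1 - RtoC a * RtoC a) / RtoC a)%C (- (RtoC a / RtoC r0))%C 1.

Lemma RtoC_ne0 (x : R) : x <> 0 -> RtoC x <> 0%C.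
Proof. intros H E. injection E. auto. Qed.

Lemma one_m_a2 (a : R) : 0 < a < 1 -> (1 - RtoC a * RtoC a)%C <> 0%C.
Proof. intros H E. injection E. intros. nra. Qed.

Section M.
Variables (r0 a : R).
Hypothesis Hr0 : 0 < r0.
Hypothesis Ha : 0 < a < 1.

Lemma psiM_den (s : C) : Cmod s < 1 -> (RtoC a * s + 1)%C <> 0%C.
Proof.
  intros Hs. replace (RtoC a * s + 1)%C with (1 + a * s)%C by ring. apply mob_ne0; auto. lra.
Qed.

Lemma psiM_eq (s : C) : Cmod s < 1 -> psiM r0 a s = (RtoC r0 * (s + RtoC a) / (1 + RtoC a * s))%C.
Proof.
  intros Hs. pose proof (psiM_den s Hs). assert (RtoC a <> 0%C) by (apply RtoC_ne0; lra).
  unfold psiM, moeb. field. split; auto. replace (1 + RtoC a * s)%C with (RtoC a * s + 1)%C by ring. auto.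
Qed.

Lemma psiM_disk (s : C) : Cmod s < 1 -> Cmod (psiM r0 a s) < r0.
Proof.
  intros Hs. rewrite psiM_eq by auto.
  assert (N : (1 + RtoC a * s)%C <> 0%C) by (replace (1 + RtoC a * s)%C with (RtoC a * s + 1)%C by ring; apply psiM_den; auto).
  rewrite Cmod_div, Cmod_mult, Cmod_R, Rabs_right by (auto || lra).
  pose proof (mob_lt s a Hs ltac:(lra)). pose proof (Cmod_pos_ne _ N).
  apply (Rmult_lt_reg_r (Cmod (1 + RtoC a * s)%C)); auto. field_simplify; [|lra].
  apply Rmult_lt_compat_l; auto.
Qed.

Lemma psiM_ne (s : C) : Cmod s < 1 -> s <> 0%C -> psiM r0 a s <> RtoC (r0 * a).
Proof.
  intros Hs Hs0 E. rewrite psiM_eq in E by auto.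
  assert (N : (1 + RtoC a * s)%C <> 0%C) by (replace (1 + RtoC a * s)%C with (RtoC a * s + 1)%C by ring; apply psiM_den; auto).
  assert (E2 : (RtoC r0 * (s + RtoC a))%C = (RtoC (r0 * a) * (1 + RtoC a * s))%C).
  { rewrite <- E. field. auto. }
  assert (E3 : (RtoC r0 * (1 - RtoC a * RtoC a) * s)%C = 0%C).
  { rewrite RtoC_mult in E2. replace (RtoC r0 * (1 - RtoC a * RtoC a) * s)%C with
      (RtoC r0 * (s + RtoC a) - RtoC r0 * RtoC a * (1 + RtoC a * s))%C by ring.
    rewrite E2. ring. }
  refine (Cmult_neq_0 _ _ (Cmult_neq_0 _ _ _ _) Hs0 E3).
  - apply RtoC_ne0; lra.
  - apply one_m_a2; auto.
Qed.

Lemma q_disk (y : C) : Cmod y < r0 -> Cmod (y / RtoC r0)%C < 1.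
Proof.
  intros H. rewrite Cmod_div by (apply RtoC_ne0; lra). rewrite Cmod_R, Rabs_right by lra.
  apply (Rmult_lt_reg_r r0); auto. field_simplify; lra.
Qed.

Lemma phiM_den (y : C) : Cmod y < r0 -> (- (RtoC a / RtoC r0) * y + 1)%C <> 0%C.
Proof.
  intros H. pose proof (mob_ne0 (y / RtoC r0)%C (- a) (q_disk y H) ltac:(lra)).
  replace (- (RtoC a / RtoC r0) * y + 1)%C with (1 + RtoC (- a) * (y / RtoC r0))%C.
  auto. rewrite RtoC_opp. field. apply RtoC_ne0; lra.
Qed.

Lemma den1 (y : C) : Cmod y < r0 -> (1 - RtoC a * (y / RtoC r0))%C <> 0%C.
Proof.
  intros H. pose proof (mob_ne0 (y / RtoC r0)%C (- a) (q_disk y H) ltac:(lra)) as N.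
  rewrite RtoC_opp in N. replace (1 + - RtoC a * (y / RtoC r0))%C with (1 - RtoC a * (y / RtoC r0))%C in N by ring.
  auto.
Qed.

Lemma den2 (y : C) : Cmod y < r0 -> (RtoC r0 - RtoC a * y)%C <> 0%C.
Proof.
  intros H. assert (R0 : RtoC r0 <> 0%C) by (apply RtoC_ne0; lra).
  replace (RtoC r0 - RtoC a * y)%C with (RtoC r0 * (1 - RtoC a * (y / RtoC r0)))%C by (field; auto).
  apply Cmult_neq_0; auto. apply den1; auto.
Qed.

Lemma phiM_eq (y : C) : Cmod y < r0 ->
  phiM r0 a y = ((y / RtoC r0 - RtoC a) / (1 - RtoC a * (y / RtoC r0)))%C.
Proof.
  intros H. pose proof (phiM_den y H).
  assert (RtoC a <> 0%C) by (apply RtoC_ne0; lra). assert (RtoC r0 <> 0%C) by (apply RtoC_ne0; lra).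
  unfold phiM, moeb. field. repeat split; auto.
  replace (RtoC r0 - RtoC a * y)%C with (RtoC r0 * (- (RtoC a / RtoC r0) * y + 1))%C by (field; auto).
  apply Cmult_neq_0; auto.
Qed.

Lemma phiM_disk (y : C) : Cmod y < r0 -> Cmod (phiM r0 a y) < 1.
Proof.
  intros H. rewrite phiM_eq by auto.
  pose proof (mob_lt (y / RtoC r0)%C (- a) (q_disk y H) ltac:(lra)) as M.
  pose proof (mob_ne0 (y / RtoC r0)%C (- a) (q_disk y H) ltac:(lra)) as N.
  rewrite RtoC_opp in M, N.
  replace (y / RtoC r0 + - RtoC a)%C with (y / RtoC r0 - RtoC a)%C in M by ring.
  replace (1 + - RtoC a * (y / RtoC r0))%C with (1 - RtoC a * (y / RtoC r0))%C in M, N by ring.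
  rewrite Cmod_div by auto. pose proof (Cmod_pos_ne _ N).
  apply (Rmult_lt_reg_r (Cmod (1 - RtoC a * (y / RtoC r0)))%C); auto. field_simplify; lra.
Qed.

Lemma phiM_ne0 (y : C) : Cmod y < r0 -> y <> RtoC (r0 * a) -> phiM r0 a y <> 0%C.
Proof.
  intros H Hy E. rewrite phiM_eq in E by auto.
  pose proof (mob_ne0 (y / RtoC r0)%C (- a) (q_disk y H) ltac:(lra)) as N.
  rewrite RtoC_opp in N. replace (1 + - RtoC a * (y / RtoC r0))%C with (1 - RtoC a * (y / RtoC r0))%C in N by ring.
  apply Hy. rewrite RtoC_mult. assert (R0 : RtoC r0 <> 0%C) by (apply RtoC_ne0; lra).
  assert (E2 : (y / RtoC r0 - RtoC a)%C = 0%C).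
  { replace (y / RtoC r0 - RtoC a)%C with ((y / RtoC r0 - RtoC a) / (1 - RtoC a * (y / RtoC r0)) * (1 - RtoC a * (y / RtoC r0)))%C by (field; split; auto; apply den2; auto).
    rewrite E. ring. }
  replace y with ((y / RtoC r0 - RtoC a) * RtoC r0 + RtoC r0 * RtoC a)%C at 1 by (field; auto).
  rewrite E2. ring.
Qed.

Lemma psi_phi (y : C) : Cmod y < r0 -> psiM r0 a (phiM r0 a y) = y.
Proof.
  intros H. rewrite psiM_eq by (apply phiM_disk; auto). rewrite phiM_eq by auto.
  pose proof (mob_ne0 (y / RtoC r0)%C (- a) (q_disk y H) ltac:(lra)) as N.
  rewrite RtoC_opp in N. replace (1 + - RtoC a * (y / RtoC r0))%C with (1 - RtoC a * (y / RtoC r0))%C in N by ring.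
  assert (RtoC a <> 0%C) by (apply RtoC_ne0; lra). assert (RtoC r0 <> 0%C) by (apply RtoC_ne0; lra).
  pose proof (one_m_a2 a Ha).
  field. repeat split; auto.
  - apply den2; auto.
  - replace (RtoC r0 - RtoC a * y + RtoC a * (y - RtoC a * RtoC r0))%C with (RtoC r0 * (1 - RtoC a * RtoC a))%C by ring.
    apply Cmult_neq_0; auto.
Qed.

Lemma phi_psi (s : C) : Cmod s < 1 -> phiM r0 a (psiM r0 a s) = s.
Proof.
  intros H. pose proof (psiM_disk s H) as D. rewrite phiM_eq by auto. rewrite psiM_eq by auto.
  assert (N : (1 + RtoC a * s)%C <> 0%C) by (replace (1 + RtoC a * s)%C with (RtoC a * s + 1)%C by ring; apply psiM_den; auto).
  assert (RtoC a <> 0%C) by (apply RtoC_ne0; lra). assert (RtoC r0 <> 0%C) by (apply RtoC_ne0; lra).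
  pose proof (one_m_a2 a Ha).
  field. repeat split; auto.
  replace (1 + RtoC a * s - RtoC a * (s + RtoC a))%C with (1 - RtoC a * RtoC a)%C by ring. auto.
Qed.

Lemma phiM_ccont (y : C) : Cmod y < r0 -> ccont (phiM r0 a) y.
Proof. intros H. apply ccont_of_derive, bridge, exK_moeb, phiM_den; auto. Qed.

End M.

Lemma punct_cover (r0 r : R) : 0 < r -> r < r0 ->
  covering_map_disk (punctured_ball r0 r) (fun u => psiM r0 (r / r0) (Emap u)).
Proof.
  intros Hr Hrr.
  assert (Hr0 : 0 < r0) by lra.
  assert (Ha : 0 < r / r0 < 1).
  { split. apply Rdiv_lt_0_compat; lra. apply (Rmult_lt_reg_r r0); auto. field_simplify; lra. }
  assert (Hra : r0 * (r / r0) = r) by (field; lra).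
  apply (transport Dstar _ Emap _ (phiM r0 (r / r0)) Emap_cover (open_punctured r0 r)).
  - intros s [Hs0 Hs1]. split; [split|].
    + unfold open_ball0. apply psiM_disk; auto.
    + intro E. apply (psiM_ne r0 (r / r0) Hr0 Ha s Hs1).
      * apply pos_ne; auto.
      * rewrite Hra. auto.
    + apply phi_psi; auto.
  - intros y [Hy1 Hy2]. unfold open_ball0 in Hy1. split; [split|].
    + apply Cmod_pos_ne. apply phiM_ne0; auto. rewrite Hra. auto.
    + apply phiM_disk; auto.
    + apply psi_phi; auto.
  - intros y [Hy1 _]. apply phiM_ccont; auto.
Qed.

Lemma ball_cover (r0 r : R) : 0 < r0 -> r0 <= r ->
  covering_map_disk (punctured_ball r0 r) (fun u => (RtoC r0 * u + 0)%C).
Proof.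
  intros Hr0 Hrr.
  assert (N : RtoC r0 <> 0%C) by (apply RtoC_ne0; lra).
  apply (transport unit_disk _ (fun u => u) (fun s => (RtoC r0 * s + 0)%C) (fun y => (/ RtoC r0 * y + 0)%C)
           id_cover (open_punctured r0 r)).
  - intros s Hs. unfold unit_disk in Hs.
    assert (Hm : Cmod (RtoC r0 * s + 0)%C < r0).
    { replace (RtoC r0 * s + 0)%C with (RtoC r0 * s)%C by ring. rewrite Cmod_mult, Cmod_R, Rabs_right by lra.
      pose proof (Cmod_ge_0 s). nra. }
    split; [split|].
    + exact Hm.
    + intro E. rewrite E, Cmod_R, Rabs_right in Hm; lra.
    + field. auto.
  - intros y [Hy1 _]. unfold open_ball0 in Hy1. split.
    + unfold unit_disk. replace (/ RtoC r0 * y + 0)%C with (y / RtoC r0)%C by (field; auto).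
      rewrite Cmod_div, Cmod_R, Rabs_right by (auto || lra).
      apply (Rmult_lt_reg_r r0); auto. field_simplify; lra.
    + field. auto.
  - intros y _. apply ccont_of_derive, bridge, exK_affine.
Qed.

Lemma hol_ball (r0 : R) : holomorphic_on unit_disk (fun u => (RtoC r0 * u + 0)%C).
Proof. intros z _. apply bridge, exK_affine. Qed.

Lemma hol_punct (r0 r : R) : 0 < r -> r < r0 -> holomorphic_on unit_disk (fun u => psiM r0 (r / r0) (Emap u)).
Proof.
  intros Hr Hrr z Hz. unfold unit_disk in Hz.
  assert (Hr0 : 0 < r0) by lra.
  assert (Ha : 0 < r / r0 < 1).
  { split. apply Rdiv_lt_0_compat; lra. apply (Rmult_lt_reg_r r0); auto. field_simplify; lra. }
  apply bridge. apply (exK_comp (psiM r0 (r / r0)) Emap z).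
  - unfold psiM. apply exK_moeb. apply psiM_den; auto. destruct (Emap_Dstar z Hz). auto.
  - unfold Emap. apply (exK_comp Cexp cay z); [apply exK_Cexp| apply exK_cay, disk_ne1; auto].
Qed.

Lemma ln_e_div (x : R) : 0 < x -> ln (exp 1 / x) = 1 - ln x.
Proof. intros H. rewrite ln_div by (auto; apply exp_pos). rewrite ln_exp. auto. Qed.

Lemma ln_le_sub1 (x : R) : 0 < x -> ln x <= x - 1.
Proof. intros H. pose proof (exp_ineq1_le (ln x)). rewrite exp_ln in H0 by auto. lra. Qed.

Lemma r_Lr (r : R) : 0 < r <= 1 -> r * (1 - ln r) <= 1.
Proof.
  intros H. pose proof (ln_le_sub1 (/ r) ltac:(apply Rinv_0_lt_compat; lra)).
  rewrite ln_Rinv in H0 by lra.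
  assert (r * (- ln r) <= r * (/ r - 1)) by (apply Rmult_le_compat_l; lra).
  replace (r * (/ r - 1)) with (1 - r) in H1 by (field; lra). lra.
Qed.

Lemma ball_case (r0 r delta M : R) (z : C) :
  0 < r0 < 1 -> r0 <= r -> 0 < delta < 1/10 -> 1 <= M ->
  Cmod z <= r0 / (96 * (2 - ln r0)) * delta / M ->
  Rbar_le (hyp_dist (punctured_ball r0 r) 0%C z) (Finite (delta / (2 * M))).
Proof.
  intros Hr0 Hrr Hd HM Hz.
  assert (HK : 2 < 2 - ln r0) by (assert (ln r0 < 0) by (rewrite <- ln_1; apply ln_increasing; lra); lra).
  assert (N : RtoC r0 <> 0%C) by (apply RtoC_ne0; lra).
  set (v := (/ RtoC r0 * z + 0)%C).
  assert (Hv : Cmod v = Cmod z / r0).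
  { unfold v. replace (/ RtoC r0 * z + 0)%C with (z / RtoC r0)%C by (field; auto).
    rewrite Cmod_div, Cmod_R, Rabs_right by (auto || lra). auto. }
  set (t := Cmod z / r0).
  assert (Ht0 : 0 <= t) by (unfold t; apply Rmult_le_pos; [apply Cmod_ge_0| left; apply Rinv_0_lt_compat; lra]).
  assert (Ht : t * (96 * (2 - ln r0) * M) <= delta).
  { unfold t. apply (Rmult_le_reg_r (/ (96 * (2 - ln r0) * M) * r0)).
    { apply Rmult_lt_0_compat; [apply Rinv_0_lt_compat; nra| lra]. }
    replace (Cmod z / r0 * (96 * (2 - ln r0) * M) * (/ (96 * (2 - ln r0) * M) * r0)) with (Cmod z) by (field; split; [|split]; lra).
    replace (delta * (/ (96 * (2 - ln r0) * M) * r0)) with (r0 / (96 * (2 - ln r0)) * delta / M) by (field; split; lra).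
    auto. }
  assert (HKM : 192 <= 96 * (2 - ln r0) * M) by nra.
  assert (Ht1 : t <= 1/3).
  { assert (t * 192 <= t * (96 * (2 - ln r0) * M)) by (apply Rmult_le_compat_l; lra). lra. }
  assert (Hv1 : Cmod v < 1) by (rewrite Hv; fold t; lra).
  apply (glb_le _ (disk_dist 0 v)).
  - exists (fun u => (RtoC r0 * u + 0)%C), 0%C, v.
    split; [apply hol_ball|]. split; [apply ball_cover; lra|].
    split; [unfold unit_disk; rewrite Cmod_0; lra|]. split; [exact Hv1|].
    split; [ring|]. split; [unfold v; field; auto| auto].
  - unfold disk_dist.
    replace ((0 - v) / (1 - Cconj 0 * v))%C with (- v)%C.
    2: { replace (Cconj 0) with (RtoC 0) by (apply injective_projections; simpl; ring). field. }
    rewrite Cmod_opp, Hv. fold t.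
    eapply Rle_trans; [apply ln_dist_bound; lra|].
    apply (Rmult_le_reg_r (2 * M)); [lra|].
    replace (delta / (2 * M) * (2 * M)) with delta by (field; lra).
    assert (t * 192 <= t * (96 * (2 - ln r0) * M)) by (apply Rmult_le_compat_l; lra).
    assert (t * M * 192 <= t * (96 * (2 - ln r0) * M)).
    { replace (t * (96 * (2 - ln r0) * M)) with (t * M * (96 * (2 - ln r0))) by ring.
      apply Rmult_le_compat_l; [nra| lra]. }
    nra.
Qed.

Lemma punct_case (r0 r delta M : R) (z : C) :
  0 < r0 < 1 -> 0 < r < r0 -> 0 < delta < 1/10 -> 1 - ln r <= M ->
  Cmod z <= r0 / (96 * (2 - ln r0)) * delta * r * (1 - ln r) / M ->
  Rbar_le (hyp_dist (punctured_ball r0 r) 0%C z) (Finite (delta / (2 * M))).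
Proof.
  intros Hr0 Hr Hd HM Hz.
  assert (Hlr0 : ln r0 < 0) by (rewrite <- ln_1; apply ln_increasing; lra).
  set (K0 := 2 - ln r0) in *. assert (HK : 2 < K0) by (unfold K0; lra).
  set (a := r / r0).
  assert (Ha : 0 < a < 1).
  { split. apply Rdiv_lt_0_compat; lra. apply (Rmult_lt_reg_r r0); [lra|]. unfold a. field_simplify; lra. }
  assert (Hra : r = r0 * a) by (unfold a; field; lra).
  assert (Hlnr : ln r = ln r0 + ln a) by (rewrite Hra, ln_mult; lra).
  set (L := - ln a).
  assert (HL : 0 < L) by (unfold L; assert (ln a < 0) by (rewrite <- ln_1; apply ln_increasing; lra); lra).
  assert (HLr : 1 - ln r = L + K0 - 1) by (unfold L, K0; lra).
  assert (HM1 : 1 <= M) by lra.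
  set (g := r0 / (96 * K0)) in *.
  assert (Hg : 0 < g <= 1/192).
  { unfold g. split. apply Rdiv_lt_0_compat; lra.
    apply (Rmult_le_reg_r (96 * K0)); [lra|]. field_simplify; lra. }
  set (m := Cmod z / r).
  assert (Hm0 : 0 <= m) by (unfold m; apply Rmult_le_pos; [apply Cmod_ge_0| left; apply Rinv_0_lt_compat; lra]).
  assert (Hzm : Cmod z = m * r) by (unfold m; field; lra).
  assert (HmM : m * M <= g * delta * (L + K0 - 1)).
  { rewrite <- HLr. apply (Rmult_le_reg_r r); [lra|].
    replace (m * M * r) with (Cmod z * M) by (rewrite Hzm; ring).
    apply (Rmult_le_reg_r (/ M)); [apply Rinv_0_lt_compat; lra|].
    replace (Cmod z * M * / M) with (Cmod z) by (field; lra).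
    eapply Rle_trans; [apply Hz|]. right. field. lra. }
  assert (Hm1 : m <= g * delta).
  { assert (m * M <= g * delta * M).
    { eapply Rle_trans; [apply HmM|]. apply Rmult_le_compat_l; [nra| lra]. }
    apply (Rmult_le_reg_r M); lra. }
  assert (Hm2 : m <= 1/1920) by nra.
  assert (Hz1 : Cmod z < r) by (rewrite Hzm; nra).
  assert (Hz0 : Cmod z < r0) by lra.
  assert (Hzr : z <> RtoC r) by (intro E; rewrite E, Cmod_R, Rabs_right in Hz1; lra).
  assert (NR0 : RtoC r0 <> 0%C) by (apply RtoC_ne0; lra).
  assert (NA : RtoC a <> 0%C) by (apply RtoC_ne0; lra).
  set (q := (z / RtoC r0)%C).
  assert (Hq : Cmod q = m * a).
  { unfold q. rewrite Cmod_div, Cmod_R, Rabs_right by (auto || lra). rewrite Hzm, Hra. field. lra. }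
  set (z1 := (ln a, PI) : C).
  assert (Hz1f : fst z1 < 0) by (unfold z1; simpl; unfold L in HL; lra).
  assert (E1 : Cexp z1 = RtoC (- a)).
  { unfold Cexp, z1. cbn [fst snd]. rewrite exp_ln, cos_PI, sin_PI by lra.
    apply injective_projections; simpl; ring. }
  set (u0 := cay z1).
  assert (Hu0 : Cmod u0 < 1) by (apply cay_disk; auto).
  assert (Hpu0 : psiM r0 a (Emap u0) = 0%C).
  { unfold Emap, u0. rewrite cay_inv by (apply re_neg_ne1; auto). rewrite E1.
    rewrite psiM_eq by (lra || (rewrite Cmod_R, Rabs_left; lra)).
    rewrite RtoC_opp. unfold Cdiv. ring. }
  set (P := phiM r0 a z).
  assert (HP : (P + RtoC a)%C = (q * (1 - RtoC a * RtoC a) / (1 - RtoC a * q))%C).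
  { unfold P. rewrite phiM_eq by (lra || auto). fold q.
    pose proof (den1 r0 a ltac:(lra) Ha z Hz0) as D. fold q in D. field. auto. }
  assert (Hden : 1/2 <= Cmod (1 - RtoC a * q)%C).
  { destruct (Cmod_rev (1 - RtoC a * q)%C 1%C) as [A _].
    replace (1 - RtoC a * q - 1)%C with (- (RtoC a * q))%C in A by ring.
    rewrite Cmod_opp, Cmod_mult, Hq in A. rewrite !Cmod_R in A. rewrite Rabs_R1, (Rabs_right a) in A by lra.
    assert (a * (m * a) <= 1/2) by nra. lra. }
  assert (HPa : Cmod (P + RtoC a)%C <= 2 * m * a * (1 - a^2)).
  { rewrite HP. rewrite Cmod_div by (intro E; rewrite E, Cmod_0 in Hden; lra).
    rewrite Cmod_mult, Hq.
    replace (1 - RtoC a * RtoC a)%C with (RtoC (1 - a^2)) by (apply injective_projections; simpl; ring).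
    rewrite Cmod_R, Rabs_right by nra.
    apply (Rmult_le_reg_r (Cmod (1 - RtoC a * q)%C)); [lra|].
    field_simplify; [|lra].
    assert (0 <= m * a * (1 - a^2)) by (apply Rmult_le_pos; nra).
    nra. }
  assert (NmA : RtoC (- a) <> 0%C) by (apply RtoC_ne0; lra).
  set (Y := (P * / RtoC (- a))%C).
  assert (HY1 : Cmod (Y - 1)%C = Cmod (P + RtoC a)%C / a).
  { replace (Y - 1)%C with ((P + RtoC a) / RtoC (- a))%C.
    - rewrite Cmod_div, Cmod_R, Rabs_left by (auto || lra). field. lra.
    - unfold Y. replace (RtoC (- a)) with (- RtoC a)%C by (apply injective_projections; simpl; ring).
      field. auto. }
  assert (H1a : 1 - a^2 <= 2 * L).
  { pose proof (ln_le_sub1 a ltac:(lra)). unfold L. nra. }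
  assert (He : Cmod (Y - 1)%C <= 2 * m * (1 - a^2)).
  { rewrite HY1. apply (Rmult_le_reg_r a); [lra|]. field_simplify; [|lra]. nra. }
  assert (He2 : Cmod (Y - 1)%C <= 2 * m) by nra.
  assert (HYf : 0 < fst Y).
  { pose proof (re_le_Cmod (Y - 1)%C).
    replace (Re (Y - 1)%C) with (fst Y - 1) in H by (simpl; ring).
    unfold Rabs in H. destruct (Rcase_abs (fst Y - 1)); lra. }
  set (eta := Clog Y).
  assert (Heta : Cmod eta <= 4 * Cmod (Y - 1)%C) by (apply Clog_bound; lra).
  assert (Heta1 : Cmod eta <= 16 * m * L) by nra.
  assert (Heta2 : Cmod eta <= 8 * m) by nra.
  assert (Heta3 : Cmod eta <= L / 100) by nra.
  pose proof (re_le_Cmod eta) as Hfe.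
  set (z2 := (z1 + eta)%C).
  assert (Hz2f : fst z2 < 0).
  { assert (F : fst z2 = ln a + Re eta) by (unfold z2, z1; simpl; auto). rewrite F.
    assert (ln a = - L) by (unfold L; ring).
    unfold Rabs in Hfe. destruct (Rcase_abs (Re eta)); lra. }
  assert (E2 : Cexp z2 = P).
  { unfold z2. rewrite Cexp_add, E1. unfold eta. rewrite Cexp_Clog by auto. unfold Y. field. auto. }
  set (v0 := cay z2).
  assert (Hv0 : Cmod v0 < 1) by (apply cay_disk; auto).
  assert (Hpv0 : psiM r0 a (Emap v0) = z).
  { unfold Emap, v0. rewrite cay_inv by (apply re_neg_ne1; auto). rewrite E2. unfold P.
    apply psi_phi; auto; lra. }
  apply (glb_le _ (disk_dist u0 v0)).
  - exists (fun u => psiM r0 a (Emap u)), u0, v0.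
    split; [apply hol_punct; lra|]. split; [apply punct_cover; lra|].
    split; [exact Hu0|]. split; [exact Hv0|]. split; [exact Hpu0|]. split; [exact Hpv0|]. auto.
  - unfold disk_dist. unfold u0, v0. rewrite cay_dist by auto.
    replace (z2 - z1)%C with eta by (unfold z2; ring).
    assert (Hden2 : L <= Cmod (Cconj z1 + z2)%C).
    { pose proof (re_le_Cmod (Cconj z1 + z2)%C) as W.
      replace (Re (Cconj z1 + z2)%C) with (- 2 * L + Re eta) in W by (unfold z2, z1, L; simpl; ring).
      unfold Rabs in W, Hfe. destruct (Rcase_abs (- 2 * L + Re eta)); destruct (Rcase_abs (Re eta)); lra. }
    set (t := Cmod eta / Cmod (Cconj z1 + z2)%C).
    pose proof (Cmod_ge_0 eta) as Hen.
    assert (Ht0 : 0 <= t) by (unfold t; apply Rmult_le_pos; [auto| left; apply Rinv_0_lt_compat; lra]).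
    assert (HtL : t * L <= Cmod eta).
    { unfold t. apply (Rle_trans _ (Cmod eta / Cmod (Cconj z1 + z2)%C * Cmod (Cconj z1 + z2)%C)).
      - apply Rmult_le_compat_l; auto.
      - right. field. lra. }
    assert (Ht1 : t <= 16 * m).
    { apply (Rmult_le_reg_r L); lra. }
    eapply Rle_trans; [apply ln_dist_bound; lra|].
    apply (Rmult_le_reg_r (2 * M)); [lra|].
    replace (delta / (2 * M) * (2 * M)) with delta by (field; lra).
    assert (HgK : g * (96 * K0) = r0) by (unfold g; field; lra).
    destruct (Rle_dec L 1) as [HL1|HL1].
    + assert (3 * t * (2 * M) <= 96 * m * M) by nra.
      assert (96 * m * M <= 96 * g * delta * (L + K0 - 1)) by nra.
      assert (96 * g * delta * (L + K0 - 1) <= 96 * g * delta * K0).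
      { apply Rmult_le_compat_l; [nra| lra]. }
      nra.
    + assert (3 * t * L * (2 * M) <= 48 * m * M) by nra.
      assert (48 * m * M <= 48 * g * delta * (L + K0 - 1)) by nra.
      assert (L + K0 - 1 <= K0 * L) by nra.
      assert (48 * g * delta * (L + K0 - 1) <= 48 * g * delta * (K0 * L)).
      { apply Rmult_le_compat_l; [nra| lra]. }
      assert (48 * g * delta * (K0 * L) = r0 * delta * L / 2) by (rewrite <- HgK; field).
      assert (r0 * delta * L / 2 <= delta * L) by (assert (0 < delta * L) by nra; nra).
      assert (3 * t * (2 * M) * L <= delta * L) by lra.
      apply (Rmult_le_reg_r L); lra.
Qed.

Theorem lemma7 :
  forall r0 : R, 0 < r0 < 1 ->
  exists gamma : R, 0 < gamma /\
    forall (delta alpha r : R) (z : C),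
      0 < delta < 1 / 10 ->
      0 < alpha -> alpha < r -> r <= 1 ->
      Cmod z <= gamma * delta * r * ln (exp 1 / r) / ln (exp 1 / alpha) ->
      Rbar_le (hyp_dist (punctured_ball r0 r) 0%C z)
              (Finite (delta / (2 * ln (exp 1 / alpha)))).
Proof.
  intros r0 Hr0.
  assert (Hlr0 : ln r0 < 0) by (rewrite <- ln_1; apply ln_increasing; lra).
  exists (r0 / (96 * (2 - ln r0))). split; [apply Rdiv_lt_0_compat; lra|].
  intros delta alpha r z Hd Ha Har Hr1 Hz.
  rewrite (ln_e_div r) in Hz by lra. rewrite (ln_e_div alpha) in Hz |- * by lra.
  assert (Hla : ln alpha < ln r) by (apply ln_increasing; lra).
  assert (Hlr : ln r <= 0).
  { destruct (Req_dec r 1). subst. rewrite ln_1. lra. rewrite <- ln_1. left. apply ln_increasing; lra. }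
  destruct (Rle_lt_dec r0 r) as [Hrr|Hrr].
  - apply ball_case; auto; try lra.
    eapply Rle_trans; [apply Hz|].
    pose proof (r_Lr r ltac:(lra)).
    assert (0 < r0 / (96 * (2 - ln r0)) * delta) by (apply Rmult_lt_0_compat; [apply Rdiv_lt_0_compat; lra| lra]).
    set (g' := r0 / (96 * (2 - ln r0)) * delta) in *.
    replace (g' * r * (1 - ln r) / (1 - ln alpha)) with
      ((g' * (r * (1 - ln r))) * / (1 - ln alpha)) by (unfold Rdiv; ring).
    replace (g' / (1 - ln alpha)) with ((g' * 1) * / (1 - ln alpha)) by (unfold Rdiv; ring).
    apply Rmult_le_compat_r; [left; apply Rinv_0_lt_compat; lra|].
    apply Rmult_le_compat_l; lra.
  - apply punct_case; auto; lra.
Qed.
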